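(* Let $N\ge 2$, $\delta>0$, and let $a$ be a $C^2$ function on the ball $B'_\delta(0)\subset\mathbb{R}^{N-1}$ with $a(0)=0$, $\nabla a(0)=0$, and $a$ not identically zero on $B'_\delta(0)$. Let $(p_n)_n$ be a sequence in $\mathbb{R}^N$ such that for some constant $C$ and all $n$ and all $x'\in B'_\delta(0)$, $$|p_n\cdot(x',a(x'))|\le C.$$ Then $(p_n)_n$ is bounded. *)

(* Defs.v *)
From HB Require Import structures.
From mathcomp Require Import all_boot all_order all_algebra.
From mathcomp Require Import all_classical all_reals all_analysis.
Set Implicit Arguments. Unset Strict Implicit. Unset Printing Implicit Defensive.
Import Order.TTheory GRing.Theory Num.Theory.
Import numFieldNormedType.Exports.
Local Open Scope ring_scope.
Local Open Scope classical_set_scope.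

Definition dotv (R : realType) (k : nat) (u v : 'rV[R]_k) : R :=
  \sum_(i < k) u 0 i * v 0 i.

Definition sqnormv (R : realType) (k : nat) (u : 'rV[R]_k) : R := dotv u u.

Definition eball0 (R : realType) (k : nat) (delta : R) : set 'rV[R]_k :=
  [set x | sqnormv x < delta ^+ 2].

Definition ebasis (R : realType) (k : nat) (i : 'I_k) : 'rV[R]_k :=
  delta_mx 0 i.

Definition C2_on (R : realType) (k : nat) (f : 'rV[R]_k -> R) (U : set 'rV[R]_k) : Prop :=
  (forall x, U x -> differentiable f x) /\
  (forall (i : 'I_k) x, U x -> differentiable (fun y => derive f y (ebasis R i)) x) /\
  (forall (i j : 'I_k) x, U x ->
     {for x, continuous (fun y => derive (fun z => derive f z (ebasis R i)) y (ebasis R j))}).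

Definition graphpt (R : realType) (k : nat) (a : 'rV[R]_k -> R) (x : 'rV[R]_k) : 'rV[R]_(k + 1) :=
  row_mx x (\row_(j < 1) a x).

(* Main.v *)
Set Warnings "-all".
Require Import Defs.
From HB Require Import structures.
From mathcomp Require Import all_boot all_order all_algebra.
From mathcomp Require Import all_classical all_reals all_analysis.
From mathcomp Require Import ring lra.
Import Order.TTheory GRing.Theory Num.Theory.
Import numFieldNormedType.Exports.
Local Open Scope ring_scope.
Local Open Scope classical_set_scope.

Lemma small (R : realType) m (a : 'rV[R]_m -> R)
  (hd : forall i, derivable a 0 (ebasis R i))
  (hg : forall i, derive a 0 (ebasis R i) = 0) (ha0 : a 0 = 0)
  (e delta : R) (he : 0 < e) (hdelta : 0 < delta) :
  exists h : R, h != 0 /\ `|h| < delta /\ forall i, `|a (h *: ebasis R i)| <= e * `|h|.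
Proof.
have H : \forall h \near 0^', forall i, `|a (h *: ebasis R i)| <= e * `|h|.
  apply: filter_forall => i.
  have := hd i; rewrite /derivable -/(derive a 0 (ebasis R i)) hg.
  move=> /cvgrPdist_le /(_ e he).
  apply: filter_app; near=> h => /=.
  have hN0 : h != 0 by near: h; exact: nbhs_dnbhs_neq.
  rewrite add0r ha0 subr0 addr0 normrN normrZ normfV.
  by rewrite ler_pdivrMl ?normr_gt0 // mulrC.
have H2 : \forall h \near (0:R)^', `|h| < delta.
  have hb : nbhs (0:R) [set h | `|h| < delta].
    apply/nbhs_ballP; exists delta => //= y.
    by rewrite /ball /= sub0r normrN.
  exact: (nbhs_dnbhs hb).
have H3 : \forall h \near (0:R)^', [/\ h != 0, `|h| < delta &
    forall i, `|a (h *: ebasis R i)| <= e * `|h|].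
  near=> h; split.
  - near: h; exact: nbhs_dnbhs_neq.
  - near: h; exact: H2.
  - near: h; exact: H.
have [h [h1 h2 h3]] := filter_ex H3.
by exists h.
Unshelve. all: by end_near.
Qed.

Lemma le_sum1 (R : realType) m (F : 'I_m -> R) i :
  (forall j, 0 <= F j) -> F i <= \sum_j F j.
Proof.
move=> h; rewrite (bigD1 i) //= lerDl; apply: sumr_ge0 => j _; exact: h.
Qed.

Lemma dot_graph (R : realType) m (a : 'rV[R]_m -> R) (u : 'rV[R]_(m + 1)) x :
  dotv u (graphpt a x) =
  \sum_(i < m) u 0 (lshift 1 i) * x 0 i + u 0 (rshift m ord0) * a x.
Proof.
rewrite /dotv big_split_ord /= big_ord1; congr (_ + _).
  by apply: eq_bigr => i _; rewrite /graphpt row_mxEl.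
by rewrite /graphpt row_mxEr mxE.
Qed.

Lemma sum_ebasis (R : realType) m (F : 'I_m -> R) h i :
  \sum_j F j * (h *: ebasis R i) 0 j = h * F i.
Proof.
rewrite (bigD1 i) //= big1 ?addr0.
  by rewrite !mxE !eqxx /= mulr1 mulrC.
by move=> j hj; rewrite !mxE (negbTE hj) andbF /= ?mulr0n !mulr0.
Qed.

Lemma sqn_parts (R : realType) m (u : 'rV[R]_(m + 1)) :
  sqnormv u = \sum_(i < m) u 0 (lshift 1 i) * u 0 (lshift 1 i)
     + u 0 (rshift m ord0) * u 0 (rshift m ord0).
Proof. by rewrite /sqnormv /dotv big_split_ord /= big_ord1. Qed.

Lemma ball_ebasis (R : realType) m (delta h : R) (i : 'I_m) :
  `|h| < delta -> eball0 delta (h *: ebasis R i).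
Proof.
move=> hh; rewrite /eball0 /= /sqnormv /dotv.
rewrite (bigD1 i) //= big1 ?addr0.
  rewrite !mxE !eqxx /= mulr1.
  have hn : 0 <= `|h| by [].
  have e : h * h = `|h| * `|h| by rewrite -!expr2 real_normK ?num_real.
  rewrite e expr2; nra.
by move=> j hj; rewrite !mxE (negbTE hj) andbF /= ?mulr0n !mulr0.
Qed.

Lemma tri (R : realType) (x y : R) : `|y| <= `|x + y| + `|x|.
Proof. by have := ler_normB (x + y) x; rewrite [x + y]addrC addrK. Qed.

Lemma sq_le (R : realType) (x B : R) : `|x| <= B -> x * x <= B * B.
Proof.
move=> hx; have e : x * x = `|x| * `|x| by rewrite -!expr2 real_normK ?num_real.
by rewrite e; apply: ler_pM.
Qed.

Theorem proposition3p1 (R : realType) (m : nat) (hm : (1 <= m)%N) (delta : R)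
  (hdelta : 0 < delta) (a : 'rV[R]_m -> R)
  (ha2 : C2_on a ((@eball0 R m delta)))
  (ha0 : a 0 = 0)
  (hgrad : forall i : 'I_m, derive a 0 (ebasis R i) = 0)
  (hnz : exists2 x, (@eball0 R m delta) x & a x <> 0)
  (p : nat -> 'rV[R]_(m + 1))
  (hp : exists C : R, forall n x, (@eball0 R m delta) x -> `| dotv (p n) (graphpt a x) | <= C) :
  exists M : R, forall n, sqnormv (p n) <= M.
Proof.
case: ha2 => hdiff _.
have h0 : eball0 delta (0 : 'rV[R]_m).
  rewrite /eball0 /= /sqnormv /dotv big1 => [|i _]; first exact: exprn_gt0.
  by rewrite mxE mul0r.
have hd : forall i, derivable a 0 (ebasis R i).
  by move=> i; apply: diff_derivable; apply: hdiff.
case: hnz => x0 hx0 hax0; case: hp => C hC.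
set A := `|a x0|.
have hA : 0 < A by rewrite normr_gt0; apply/eqP.
set K := \sum_j `|x0 0 j|.
have hK : 0 <= K by apply: sumr_ge0.
have hden : 0 < 2 * (m%:R * K + 1) :> R.
  by apply: mulr_gt0 => //; apply: ltr_wpDl => //; apply: mulr_ge0.
set e := A / (2 * (m%:R * K + 1)).
have he : 0 < e by apply: divr_gt0.
have hmeK : m%:R * e * K <= A / 2.
  have ee : e * (2 * (m%:R * K + 1)) = A by rewrite /e mulfVK // gt_eqF.
  have hm0 : 0 <= m%:R :> R by [].
  lra.
have [h [hN0 [hhd hsmall]]] := @small R m a hd hgrad ha0 e delta he hdelta.
set H := `|h|.
have hH : 0 < H by rewrite normr_gt0.
pose Q n := \sum_j `|p n 0 (lshift 1 j)|.
pose S n := `|p n 0 (rshift m ord0)|.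
have F1 n : S n * A <= C + Q n * K.
  have := hC n x0 hx0; rewrite dot_graph.
  set L := \sum_i _.
  have hL : `|L| <= Q n * K.
    apply: le_trans (ler_norm_sum _ _ _) _; rewrite mulr_suml.
    apply: ler_sum => j _; rewrite normrM; apply: ler_wpM2l => //.
    by apply: le_sum1 => k.
  move=> hLC; rewrite /S /A -normrM.
  apply: le_trans (@tri R L _) _; lra.
have F2 n i : H * `|p n 0 (lshift 1 i)| <= C + S n * e * H.
  have := hC n (h *: ebasis R i) (@ball_ebasis R m delta h i hhd).
  rewrite dot_graph sum_ebasis => hc.
  rewrite /H -normrM.
  apply: le_trans (@tri R (p n 0 (rshift m ord0) * a (h *: ebasis R i)) _) _.
  apply: lerD; first by rewrite addrC.
  rewrite normrM -mulrA; apply: ler_wpM2l => //.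
have F2s n : H * Q n <= m%:R * C + m%:R * (S n * e * H).
  rewrite /Q mulr_sumr; apply: le_trans (ler_sum _ (fun i _ => F2 n i)) _.
  by rewrite sumr_const card_ord mulrnDl !mulr_natl.
set Qb := 2 * (m%:R * C * A + m%:R * e * H * C) / (H * A).
have FQ n : Q n <= Qb.
  rewrite /Qb ler_pdivlMr ?mulr_gt0 //.
  have hm0 : 0 <= m%:R :> R by [].
  have hS : 0 <= S n by exact: normr_ge0.
  have hQ : 0 <= Q n by apply: sumr_ge0.
  have p1 := ler_wpM2r (ltW hA) (F2s n).
  have p2 := ler_wpM2r (mulr_ge0 (mulr_ge0 hm0 (ltW he)) (ltW hH)) (F1 n).
  have p3 := ler_wpM2r (mulr_ge0 (ltW hH) hQ) hmeK.
  simpl in p1, p2, p3.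
  lra.
set Sb := (C + Qb * K) / A.
have FS n : S n <= Sb.
  rewrite /Sb ler_pdivlMr //; apply: le_trans (F1 n) _.
  by apply: lerD => //; apply: ler_wpM2r.
exists (m%:R * (Qb * Qb) + Sb * Sb) => n.
rewrite sqn_parts; apply: lerD.
  apply: (@le_trans _ _ (\sum_(i < m) Qb * Qb)); last first.
    by rewrite sumr_const card_ord mulr_natl.
  apply: ler_sum => i _; apply: sq_le; apply: le_trans (FQ n).
  by apply: le_sum1 => k.
by apply: sq_le; apply: FS.
Qed.
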